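(* Let $G$ be a group with weak paradoxical towers. Then $G$ is not amenable.
   Context: For $n\in\mathbb N$, a group $G$ has weak $n$-paradoxical towers if for every $m\in\mathbb N$ there exist a finite subset $D\subseteq G$ with $|D|\ge m$, subsets $K_1,\dots,K_n\subseteq G$ and elements $g_1,\dots,g_n\in G$ such that for each $j$ the sets $\{dK_j\}_{d\in D}$ are pairwise disjoint, and $\bigcup_{j=1}^n g_jK_j=G$. $G$ has weak paradoxical towers if it has weak $n$-paradoxical towers for some $n$. *)

(* Defs.v *)
(* abstract (possibly infinite, discrete) groups as explicit records,
   amenability via a finitely additive left-invariant probability measure on all subsets. *)
From Stdlib Require Import Reals List Arith.
Open Scope R_scope.

Record Group := {
  carrier :> Type;
  gmul : carrier -> carrier -> carrier;
  gone : carrier;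
  ginv : carrier -> carrier;
  gmulA : forall x y z, gmul x (gmul y z) = gmul (gmul x y) z;
  gmul1 : forall x, gmul gone x = x;
  gmulV : forall x, gmul (ginv x) x = gone
}.

Definition ltrans (G : Group) (g : G) (A : G -> Prop) : G -> Prop :=
  fun x => exists a, A a /\ x = gmul G g a.

Definition weak_n_paradoxical_towers (G : Group) (n : nat) : Prop :=
  forall m : nat, exists (D : list G) (K : nat -> G -> Prop) (g : nat -> G),
    NoDup D /\ (m <= length D)%nat /\
    (forall j, (j < n)%nat -> forall d d', In d D -> In d' D -> d <> d' ->
        forall x, ~ (ltrans G d (K j) x /\ ltrans G d' (K j) x)) /\
    (forall x : G, exists j, (j < n)%nat /\ ltrans G (g j) (K j) x).

Definition weak_paradoxical_towers (G : Group) : Prop :=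
  exists n : nat, weak_n_paradoxical_towers G n.

Definition amenable (G : Group) : Prop :=
  exists mu : (G -> Prop) -> R,
    (forall A, 0 <= mu A) /\
    mu (fun _ => True) = 1 /\
    (forall A B : G -> Prop, (forall x, ~ (A x /\ B x)) ->
        mu (fun x => A x \/ B x) = mu A + mu B) /\
    (forall (g : G) (A : G -> Prop), mu (ltrans G g A) = mu A).

(* Main.v *)
Require Import Defs.
From Stdlib Require Import Reals List Arith.
From Stdlib Require Import Lra Lia FunctionalExtensionality PropExtensionality.

Section Aux.
Variable G : Group.
Variable mu : (G -> Prop) -> R.
Hypothesis mu0 : forall A, 0 <= mu A.
Hypothesis muadd : forall A B : G -> Prop, (forall x, ~ (A x /\ B x)) ->
        mu (fun x => A x \/ B x) = mu A + mu B.

Lemma mu_ext (A B : G -> Prop) : (forall x, A x <-> B x) -> mu A = mu B.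
Proof.
  intro H. f_equal. apply functional_extensionality. intro x.
  apply propositional_extensionality. apply H.
Qed.

Lemma mu_mono (A B : G -> Prop) : (forall x, A x -> B x) -> mu A <= mu B.
Proof.
  intro H.
  assert (E : mu B = mu (fun x => A x \/ (B x /\ ~ A x))).
  { apply mu_ext. intro x. split.
    - intro Hb. destruct (Classical_Prop.classic (A x)); tauto.
    - intros [Ha | [Hb _]]; auto. }
  rewrite E, muadd. { specialize (mu0 (fun x => B x /\ ~ A x)). lra. }
  intros x [Ha [_ Hn]]. auto.
Qed.

Lemma mu_subadd (A B : G -> Prop) : mu (fun x => A x \/ B x) <= mu A + mu B.
Proof.
  assert (E : mu (fun x => A x \/ B x) = mu (fun x => A x \/ (B x /\ ~ A x))).
  { apply mu_ext. intro x. split.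
    - intros [Ha|Hb]; auto. destruct (Classical_Prop.classic (A x)); tauto.
    - intros [Ha | [Hb _]]; auto. }
  rewrite E, muadd. 2:{ intros x [Ha [_ Hn]]. auto. }
  assert (mu (fun x => B x /\ ~ A x) <= mu B) by (apply mu_mono; tauto). lra.
Qed.

Fixpoint sumf (f : nat -> R) (n : nat) : R :=
  match n with O => 0 | S k => sumf f k + f k end.

Lemma mu_empty : mu (fun _ => False) = 0.
Proof.
  assert (H := muadd (fun _ => False) (fun _ => False) ltac:(tauto)).
  assert (E : mu (fun x : G => False \/ False) = mu (fun _ => False)).
  { apply mu_ext. tauto. }
  lra.
Qed.

Lemma mu_union_le (P : nat -> G -> Prop) (n : nat) :
  mu (fun x => exists j, (j < n)%nat /\ P j x) <= sumf (fun j => mu (P j)) n.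
Proof.
  induction n as [|n IH]; simpl.
  - rewrite <- mu_empty. apply mu_mono. intros x [j [Hj _]]. lia.
  - eapply Rle_trans.
    2:{ eapply Rplus_le_compat_r. exact IH. }
    eapply Rle_trans. 2: apply mu_subadd.
    apply mu_mono. intros x [j [Hj Hp]].
    destruct (Nat.eq_dec j n) as [->|Hne]; [right; auto | left; exists j; split; [lia|auto]].
Qed.

Lemma mu_disj_union (P : G -> G -> Prop) (D : list G) :
  NoDup D ->
  (forall d d', In d D -> In d' D -> d <> d' -> forall x, ~ (P d x /\ P d' x)) ->
  mu (fun x => exists d, In d D /\ P d x) = fold_right (fun d r => mu (P d) + r) 0 D.
Proof.
  induction D as [|a D IH]; intros Hnd Hdis; simpl.
  - rewrite <- mu_empty. apply mu_ext. intro x. split; [intros [d [[] _]] | tauto].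
  - inversion Hnd as [|? ? Hna Hnd']; subst.
    rewrite <- IH; auto.
    2:{ intros d d' Hd Hd'. apply Hdis; simpl; auto. }
    rewrite <- muadd.
    + apply mu_ext. intro x. split.
      * intros [d [[<-|Hd] Hp]]; [left; auto | right; exists d; auto].
      * intros [Hp | [d [Hd Hp]]]; [exists a; simpl; auto | exists d; simpl; auto].
    + intros x [Ha [d [Hd Hp]]]. refine (Hdis a d _ _ _ x _); simpl; auto.
      intro E; subst; contradiction.
Qed.

End Aux.

Lemma sumf_bound (c : R) (f : nat -> R) (n : nat) :
  (forall j, (j < n)%nat -> c * f j <= 1) -> c * sumf f n <= INR n.
Proof.
  induction n as [|n IH]; intro H; cbn [sumf].
  - simpl; lra.
  - rewrite S_INR. rewrite Rmult_plus_distr_l.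
    assert (c * sumf f n <= INR n) by (apply IH; intros; apply H; lia).
    assert (c * f n <= 1) by (apply H; lia). lra.
Qed.

Theorem lemma3p11 (G : Group) : weak_paradoxical_towers G -> ~ amenable G.
Proof.
  intros [n Hn] [mu [H0 [H1 [Hadd Hinv]]]].
  destruct (Hn (S n)) as [D [K [g [Hnd [Hlen [Hdis Hcov]]]]]].
  assert (Hj : forall j, (j < n)%nat -> INR (length D) * mu (K j) <= 1).
  { intros j Hjn.
    assert (E : fold_right (fun d r => mu (ltrans G d (K j)) + r) 0 D
                = INR (length D) * mu (K j)).
    { clear -Hinv. induction D as [|a D IH]; simpl.
      - lra.
      - rewrite IH, Hinv. destruct (length D); simpl; lra. }
    rewrite <- E, <- (mu_disj_union G mu Hadd (fun d => ltrans G d (K j)) D Hnd).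
    - rewrite <- H1. apply (mu_mono G mu H0 Hadd). auto.
    - apply Hdis; auto. }
  assert (Hs : 1 <= sumf (fun j => mu (K j)) n).
  { rewrite <- H1.
    apply Rle_trans with (sumf (fun j => mu (ltrans G (g j) (K j))) n).
    2:{ apply Req_le. clear -Hinv. induction n; simpl; auto. rewrite IHn, Hinv; auto. }
    eapply Rle_trans. 2: apply (mu_union_le G mu H0 Hadd (fun j => ltrans G (g j) (K j)) n).
    apply (mu_mono G mu H0 Hadd). intros x _. apply Hcov. }
  assert (Hb := sumf_bound (INR (length D)) (fun j => mu (K j)) n Hj).
  apply le_INR in Hlen. rewrite S_INR in Hlen.
  assert (0 <= INR n) by apply pos_INR.
  nra.
Qed.
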